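(* In the unramified minimax setting below, with $\Sigma_{m,n}=\mathrm{diag}(\varpi_\mathrm{F}^{(m+1)(n-1)},\varpi_\mathrm{F}^{(m+1)(n-2)},\dots,\varpi_\mathrm{F}^{m+1},1)$ and $\mathrm{K}':=\Sigma_{m,n}\mathrm{K}_n(n(m+1))\Sigma_{m,n}^{-1}$, we have: (1) $\mathrm{H}^1\cap\mathrm{K}'=\mathrm{U}^{\lfloor m/2\rfloor+1}\cap\mathrm{K}'$; (2) $(\mathrm{U}_n\cap\mathrm{J}^1)\mathrm{H}^1\cap\mathrm{K}'=(\mathrm{U}_n\cap\mathrm{U}^{\lfloor (m+1)/2\rfloor})\mathrm{U}^{\lfloor m/2\rfloor+1}\cap\mathrm{K}'$; (3) $\mathbf{J}\cap\mathrm{K}'=\mathrm{J}^1\cap\mathrm{K}'$.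
   Context: $\mathrm{F}$ non-archimedean local field, $\mathfrak{o}_\mathrm{F}$, $\mathfrak{p}_\mathrm{F}=\varpi_\mathrm{F}\mathfrak{o}_\mathrm{F}$, residue field $k_\mathrm{F}$; $n\geqslant2$. $\mathrm{K}_n=\mathrm{GL}_n(\mathfrak{o}_\mathrm{F})$, $\mathrm{K}_n(N)=\{\left(\begin{smallmatrix}a&b\\c&d\end{smallmatrix}\right)\in\mathrm{K}_n: c\in\mathrm{M}_{1\times(n-1)}(\mathfrak{p}_\mathrm{F}^N),\ d\in1+\mathfrak{p}_\mathrm{F}^N\}$. $\mathrm{U}_n$: upper unitriangular subgroup of $\mathrm{GL}_n(\mathrm{F})$. Unramified minimax setting: $m\geqslant1$ is an integer, $\mathrm{E}/\mathrm{F}$ an unramified extension of degree $n$ and $\beta\in\mathrm{E}$ with $\mathrm{E}=\mathrm{F}[\beta]$, $\nu_\mathrm{E}(\beta)=-m$, and $\varpi_\mathrm{F}^m\beta+\mathfrak{p}_\mathrm{E}$ generating $k_\mathrm{E}$ over $k_\mathrm{F}$. Let $X^n+a_{n-1}X^{n-1}+\dots+a_0$ be the minimal polynomial of $\beta$. Identify $\mathrm{E}$ with $\mathrm{F}^n$ via the basis $\{\varpi_\mathrm{F}^{km}\beta^k:0\leqslant k\leqslant n-1\}$, so $\mathrm{E}\subset\mathrm{M}_n(\mathrm{F})$, $\mathfrak{o}_\mathrm{E}\subset\mathrm{M}_n(\mathfrak{o}_\mathrm{F})$, $\mathfrak{p}_\mathrm{E}=\varpi_\mathrm{F}\mathfrak{o}_\mathrm{E}$,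 and $$\beta=\begin{pmatrix}&&&-\varpi_\mathrm{F}^{(n-1)m}a_0\\ \varpi_\mathrm{F}^{-m}&&&-\varpi_\mathrm{F}^{(n-2)m}a_1\\ &\ddots&&\vdots\\ &&\varpi_\mathrm{F}^{-m}&-a_{n-1}\end{pmatrix}.$$ For $r\geqslant1$ let $\mathrm{U}^r=1+\mathrm{M}_n(\mathfrak{p}_\mathrm{F}^r)$. Define $\mathrm{H}^1=(1+\mathfrak{p}_\mathrm{E})\mathrm{U}^{\lfloor m/2\rfloor+1}$, $\mathrm{J}^1=(1+\mathfrak{p}_\mathrm{E})\mathrm{U}^{\lfloor (m+1)/2\rfloor}$, and $\mathbf{J}=\mathrm{E}^\times\mathrm{U}^{\lfloor (m+1)/2\rfloor}$. *)

(* Defs.v *)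
From HB Require Import structures.
From mathcomp Require Import all_boot all_order all_algebra all_field.
Set Implicit Arguments. Unset Strict Implicit. Unset Printing Implicit Defensive.
Import Order.TTheory GRing.Theory Num.Theory.
Local Open Scope ring_scope.

Definition is_dval (K : fieldType) (v : K -> int) : Prop :=
  (forall x y, x != 0 -> y != 0 -> v (x * y) = v x + v y) /\
  (forall x y, x != 0 -> y != 0 -> x + y != 0 -> Num.min (v x) (v y) <= v (x + y)).

(* x \in p^r  (r : int);  0 lies in every p^r *)
Definition inP (K : fieldType) (v : K -> int) (r : int) (x : K) : Prop :=
  x = 0 \/ r <= v x.
Definition inO (K : fieldType) (v : K -> int) (x : K) : Prop := inP v 0 x.

Definition v_complete (K : fieldType) (v : K -> int) : Prop :=
  forall u : nat -> K,
    (forall N : int, exists M, forall i j, (M <= i)%N -> (M <= j)%N -> inP v N (u i - u j)) ->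
    exists l, forall N : int, exists M, forall i, (M <= i)%N -> inP v N (u i - l).

Definition finite_residue (K : fieldType) (v : K -> int) : Prop :=
  exists s : seq K, (forall y, y \in s -> inO v y) /\
    forall x, inO v x -> exists2 y, y \in s & inP v 1 (x - y).

(* non-archimedean local field: complete, discretely valued, finite residue field;
   normalized by the existence of a uniformizer (supplied separately) *)
Definition nonarch_local_field (F : fieldType) (v : F -> int) : Prop :=
  [/\ is_dval v, v_complete v & finite_residue v].

Definition Ebasis (F : fieldType) (E : fieldExtType F) (n m : nat) (w : F) (beta : E)
  : n.-tuple E := [tuple ((w ^+ (i * m))%:A * beta ^+ i) | i < n].

Definition Emat (F : fieldType) (E : fieldExtType F) (n m : nat) (w : F) (beta : E)
  (x : E) : 'M[F]_n :=
  \matrix_(i < n, j < n)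
     coord (Ebasis n m w beta) i (x * tnth (Ebasis n m w beta) j).

Section Groups.
Variables (F : fieldType) (v : F -> int) (n : nat).

Definition Ur (r : nat) (g : 'M[F]_n) : Prop :=
  forall i j, inP v r%:Z ((g - 1%:M) i j).

Definition Un (g : 'M[F]_n) : Prop :=
  forall i j : 'I_n, (g i i = 1) /\ ((j < i)%N -> g i j = 0).

Definition Kn (g : 'M[F]_n) : Prop :=
  (forall i j, inO v (g i j)) /\ \det g != 0 /\ v (\det g) = 0.

Definition KnN (N : nat) (g : 'M[F]_n) : Prop :=
  Kn g /\
  (forall i j : 'I_n, (i : nat) = n.-1 -> (j < n.-1)%N -> inP v N%:Z (g i j)) /\
  (forall i : 'I_n, (i : nat) = n.-1 -> inP v N%:Z (g i i - 1)).

Definition Sigma (w : F) (m : nat) : 'M[F]_n :=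
  \matrix_(i < n, j < n) (if i == j then w ^+ ((m + 1) * (n.-1 - i)) else 0).

Definition Kprime (w : F) (m : nat) (g : 'M[F]_n) : Prop :=
  exists k, KnN (n * (m + 1)) k /\ g = Sigma w m *m k *m invmx (Sigma w m).
End Groups.

Section EGroups.
Variables (F : fieldType) (E : fieldExtType F) (v : F -> int) (vE : E -> int)
          (n m : nat) (w : F) (beta : E).
Local Notation M := (Emat n m w beta).

Definition OnePE (g : 'M[F]_n) : Prop := exists x : E, inP vE 1 (x - 1) /\ g = M x.
Definition Etimes (g : 'M[F]_n) : Prop := exists x : E, x != 0 /\ g = M x.

Definition H1 (g : 'M[F]_n) : Prop :=
  exists e u, OnePE e /\ Ur v (m./2 + 1) u /\ g = e *m u.
Definition J1 (g : 'M[F]_n) : Prop :=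
  exists e u, OnePE e /\ Ur v (m.+1)./2 u /\ g = e *m u.
Definition Jbold (g : 'M[F]_n) : Prop :=
  exists e u, Etimes e /\ Ur v (m.+1)./2 u /\ g = e *m u.
End EGroups.

(* Main.v *)
Require Import Defs.
From HB Require Import structures.
From mathcomp Require Import all_boot all_order all_algebra all_field.
From Stdlib Require Import ClassicalEpsilon Classical.
From mathcomp Require Import zify.
Import Order.TTheory GRing.Theory Num.Theory.
Local Open Scope ring_scope.
Set Implicit Arguments. Unset Strict Implicit. Unset Printing Implicit Defensive.

Section Val.
Variables (K : fieldType) (v : K -> int).
Hypothesis Hv : is_dval v.

Lemma dvM x y : x != 0 -> y != 0 -> v (x * y) = v x + v y.
Proof. exact: Hv.1. Qed.

Lemma dv1 : v 1 = 0.
Proof.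
have := dvM (oner_neq0 K) (oner_neq0 K); rewrite mulr1 => h.
by apply/eqP; rewrite -(subrr (v 1)) {2}h addrK.
Qed.

Lemma dvN1 : v (-1) = 0.
Proof.
have h1 : (-1 : K) != 0 by rewrite oppr_eq0 oner_neq0.
have := dvM h1 h1; rewrite mulrNN mulr1 dv1 => /eqP.
by rewrite eq_sym -mulr2n -mulr_natl mulf_eq0 /= => /eqP.
Qed.

Lemma dvN x : v (- x) = v x.
Proof.
have [->|x0] := eqVneq x 0; first by rewrite oppr0.
by rewrite -mulN1r dvM ?oppr_eq0 ?oner_neq0 // dvN1 add0r.
Qed.

Lemma dvV x : x != 0 -> v x^-1 = - v x.
Proof.
move=> x0; have := dvM x0 (invr_neq0 x0); rewrite mulfV // dv1 => /eqP.
by rewrite eq_sym addrC addr_eq0 => /eqP.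
Qed.

Lemma dvX x k : x != 0 -> v (x ^+ k) = (k%:Z * v x).
Proof.
move=> x0; elim: k => [|k IH]; first by rewrite expr0 dv1 mul0r.
by rewrite exprS dvM ?expf_neq0 // IH intS mulrDl mul1r.
Qed.

Lemma inP0 r : inP v r 0. Proof. by left. Qed.

Lemma inPW r s a : r <= s -> inP v s a -> inP v r a.
Proof. by move=> rs [->|h]; [left|right; apply: le_trans h]. Qed.

Lemma inPD r a b : inP v r a -> inP v r b -> inP v r (a + b).
Proof.
move=> [->|ha]; first by rewrite add0r.
move=> [->|hb]; first by rewrite addr0; right.
have [->|a0] := eqVneq a 0; first by rewrite add0r; right.
have [->|b0] := eqVneq b 0; first by rewrite addr0; right.
have [->|ab0] := eqVneq (a + b) 0; first by left.
right; apply: le_trans (Hv.2 a b a0 b0 ab0); by rewrite le_min ha hb.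
Qed.

Lemma inPN r a : inP v r a -> inP v r (- a).
Proof. by move=> [->|h]; [left; rewrite oppr0|right; rewrite dvN]. Qed.

Lemma inPB r a b : inP v r a -> inP v r b -> inP v r (a - b).
Proof. by move=> ha hb; apply: inPD => //; apply: inPN. Qed.

Lemma inP_sum r (I : Type) (s : seq I) (P : pred I) (f : I -> K) :
  (forall i, P i -> inP v r (f i)) -> inP v r (\sum_(i <- s | P i) f i).
Proof. by move=> h; apply: (big_ind (inP v r)) => //; [apply: inP0| apply: inPD]. Qed.

Lemma inPM r s a b : inP v r a -> inP v s b -> inP v (r + s) (a * b).
Proof.
move=> [->|ha]; first by rewrite mul0r; left.
move=> [->|hb]; first by rewrite mulr0; left.
have [->|a0] := eqVneq a 0; first by rewrite mul0r; left.
have [->|b0] := eqVneq b 0; first by rewrite mulr0; left.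
by right; rewrite dvM // lerD.
Qed.

Lemma inP_val r a : inP v r a -> a != 0 -> r <= v a.
Proof. by move=> [->|h]; [rewrite eqxx|]. Qed.

Lemma not_inP_1 r : 0 < r -> ~ inP v r 1.
Proof.
move=> r0 [/eqP|h]; first by rewrite oner_eq0.
by move: h; rewrite dv1 leNgt r0.
Qed.

Lemma not_inP_N1 r : 0 < r -> ~ inP v r (-1).
Proof. by move=> r0 /inPN; rewrite opprK; apply: not_inP_1. Qed.

Lemma inO1 : inO v 1. Proof. by right; rewrite dv1. Qed.

End Val.

Lemma inPb_P (K : fieldType) (v : K -> int) r a :
  reflect (inP v r a) ((a == 0) || (r <= v a)).
Proof.
apply: (iffP orP) => [[/eqP ->|h]|[->|h]]; by [left|right|left; rewrite eqxx|right].
Qed.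

Lemma half_facts_gen (m : nat) : (1 <= m)%N ->
  (m./2 + 1 <= m + 1)%N /\ (1 <= (m.+1)./2)%N /\ (1 <= m./2 + 1)%N.
Proof.
move=> Hm; have h1 := odd_double_half m; have h2 := odd_double_half m.+1.
rewrite -addnn in h1; rewrite -addnn in h2.
have b1 := leq_b1 (odd m); have b2 := leq_b1 (odd m.+1).
lia.
Qed.

Section Main.
Variables (F : fieldType) (v : F -> int) (w : F) (E : fieldExtType F)
  (vE : E -> int) (n m : nat) (beta : E).
Hypotheses (Hv : is_dval v) (Hcomp : v_complete v) (Hw : v w = 1)
  (Hw0 : w != 0) (Hn : (2 <= n)%N) (Hm : (1 <= m)%N)
  (HdimE : \dim {: E} = n) (HvE : is_dval vE)
  (HvEc : forall c : F, c != 0 -> vE c%:A = v c)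
  (Hgen : (<< 1%VS; beta >>)%VS = fullv) (Hb0 : beta != 0)
  (Hvb : vE beta = - (m%:Z))
  (Hres : forall x : E, inO vE x -> exists s : seq F, (forall c, c \in s -> inO v c) /\
      inP vE 1 (x - \sum_(i < size s) (s`_i)%:A * ((w ^+ m)%:A * beta) ^+ i)).

Let pi := (w ^+ m)%:A * beta.
Let X := Ebasis n m w beta.

Lemma alg_neq0 (c : F) : c != 0 -> c%:A != 0 :> E.
Proof. by move=> c0; rewrite scaler_eq0 negb_or c0 oner_neq0. Qed.

Lemma pi_neq0 : pi != 0.
Proof. by rewrite mulf_neq0 // alg_neq0 // expf_neq0. Qed.

Lemma vpi : vE pi = 0.
Proof.
rewrite /pi dvM // ?alg_neq0 ?expf_neq0 // HvEc ?expf_neq0 //.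
by rewrite dvX // Hw mulr1 Hvb subrr.
Qed.

Lemma vpiX i : vE (pi ^+ i) = 0.
Proof. by rewrite dvX // ?pi_neq0 // vpi mulr0. Qed.

Lemma tnthX (i : 'I_n) : tnth X i = pi ^+ i.
Proof.
rewrite tnth_mktuple /pi exprMn; congr (_ * _).
by rewrite exprZn expr1n -exprM mulnC.
Qed.

Lemma nthX (i : 'I_n) : X`_i = pi ^+ i.
Proof. by rewrite -tnthX (tnth_nth 0). Qed.

Lemma adjpi : adjoin_degree 1%AS pi = n.
Proof.
have h : (<<1%AS; pi>>)%VS = fullv.
  apply/eqP; rewrite eqEsubv subvf /= -Hgen sub_adjoin1v.
  have -> : beta = (w ^+ m)^-1 *: pi.
    by rewrite /pi -scalerAl scalerA mulVf ?expf_neq0 // scale1r mul1r.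
  by rewrite memvZ // memv_adjoin.
have := dim_Fadjoin 1%AS pi; rewrite h HdimE /= dimv1 muln1 => ->.
by [].
Qed.

Lemma freeX : free X.
Proof.
apply/freeP => k hk i.
pose p : {poly E} := \poly_(j < n) (k (insubd i j))%:A.
have pO : p \is a polyOver 1%AS.
  apply/polyOverP => j; rewrite coef_poly; case: ifP => _; last exact: mem0v.
  by rewrite memvZ // mem1v.
have : root p pi.
  apply/rootP; rewrite horner_poly -[RHS]hk; apply: eq_bigr => j _.
  by rewrite valKd nthX mulr_algl.
rewrite (@root_small_adjoin_poly _ _ 1%AS) // ?adjpi ?size_poly // => /eqP /polyP /(_ i).
rewrite coef_poly ltn_ord valKd coef0 => /eqP.
by rewrite scaler_eq0 oner_eq0 orbF => /eqP.
Qed.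

Lemma basisX : basis_of fullv X.
Proof. by rewrite basisEfree freeX subvf size_tuple HdimE leqnn. Qed.

Local Notation cd i x := (coord X i x).

Lemma cd_expand x : x = \sum_i cd i x *: pi ^+ i.
Proof.
rewrite {1}(coord_basis basisX (memvf x)); apply: eq_bigr => i _.
by rewrite nthX.
Qed.

Lemma cd_sum (k : 'I_n -> F) j : cd j (\sum_i k i *: pi ^+ i) = k j.
Proof.
rewrite -(coord_sum_free k j freeX); congr coord; apply: eq_bigr => i _.
by rewrite nthX.
Qed.

Lemma cd_pi (i j : 'I_n) : cd j (pi ^+ i) = (i == j)%:R.
Proof. by rewrite -nthX coord_free // freeX. Qed.

Lemma inP_alg r (c : F) : inP v r c -> inP vE r c%:A.
Proof.
move=> [->|h]; first by rewrite scale0r; left.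
have [->|c0] := eqVneq c 0; first by rewrite scale0r; left.
by right; rewrite HvEc.
Qed.

Lemma inPZ r s (c : F) (y : E) : inP v r c -> inP vE s y -> inP vE (r + s) (c *: y).
Proof. by move=> hc hy; rewrite -mulr_algl; apply: inPM => //; apply: inP_alg. Qed.

Lemma inO_piX i : inO vE (pi ^+ i).
Proof. by right; rewrite vpiX. Qed.

Lemma IB_easy (t : int) x : (forall i, inP v t (cd i x)) -> inP vE t x.
Proof.
move=> h; rewrite (cd_expand x); apply: inP_sum => // i _.
by rewrite -[t]addr0; apply: inPZ => //; apply: inO_piX.
Qed.


Definition Lf (e : 'I_n -> F) : E := \sum_i e i *: pi ^+ i.

Definition Lat (k : nat) (y : E) := exists e : 'I_n -> F,
  [/\ forall i, inO v (e i), forall i : 'I_n, (k <= i)%N -> e i = 0 & y = Lf e].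
Definition Approx k x := exists2 y, Lat k y & inP vE 1 (x - y).

Lemma inOM a b : inO v a -> inO v b -> inO v (a * b).
Proof. by move=> ha hb; have := inPM Hv ha hb; rewrite addr0. Qed.

Lemma Lat0 k : Lat k 0.
Proof.
exists (fun _ => 0); split => //; first by move=> i; left.
by rewrite /Lf big1 // => i _; rewrite scale0r.
Qed.

Lemma LatD k y z : Lat k y -> Lat k z -> Lat k (y + z).
Proof.
move=> [e [e1 e2 ->]] [f [f1 f2 ->]]; exists (fun i => e i + f i); split.
- by move=> i; apply: (inPD Hv (e1 i) (f1 i)).
- by move=> i hi; rewrite e2 ?f2 // addr0.
- by rewrite /Lf -big_split; apply: eq_bigr => i _; rewrite scalerDl.
Qed.

Lemma LatZ k c y : inO v c -> Lat k y -> Lat k (c *: y).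
Proof.
move=> hc [e [e1 e2 ->]]; exists (fun i => c * e i); split.
- by move=> i; apply: inOM.
- by move=> i hi; rewrite e2 ?mulr0.
- by rewrite /Lf scaler_sumr; apply: eq_bigr => i _; rewrite scalerA.
Qed.

Lemma Lat_pi k i : (i < k)%N -> (k <= n)%N -> Lat k (pi ^+ i).
Proof.
move=> ik kn; have iN : (i < n)%N := leq_trans ik kn.
exists (fun j : 'I_n => ((j : nat) == i)%:R); split.
- by move=> j; case: eqP => _; [exact: (inO1 Hv) | left].
- move=> j hj; case: eqP => // ji; move: hj ik; rewrite ji => a b.
  by move: (leq_trans b a); rewrite ltnn.
- rewrite /Lf (bigD1 (Ordinal iN)) //= eqxx scale1r big1 ?addr0 // => j.
  by move=> /negP hj; case: eqP => [ji|_]; [case: hj; apply/eqP/val_inj | rewrite scale0r].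
Qed.

Lemma Approx_Lat k y : Lat k y -> Approx k y.
Proof. by move=> h; exists y => //; rewrite subrr; left. Qed.

Lemma Approx_trans k x z : Approx k z -> inP vE 1 (x - z) -> Approx k x.
Proof.
move=> [y hy hz] hx; exists y => //.
have -> : x - y = (x - z) + (z - y) by rewrite addrA subrK.
exact: (inPD HvE).
Qed.

Lemma ApproxD k x1 x2 : Approx k x1 -> Approx k x2 -> Approx k (x1 + x2).
Proof.
move=> [y1 h1 e1] [y2 h2 e2]; exists (y1 + y2); first exact: LatD.
by rewrite opprD addrACA; apply: (inPD HvE).
Qed.

Lemma ApproxZ k c x : inO v c -> Approx k x -> Approx k (c *: x).
Proof.
move=> hc [y hy e]; exists (c *: y); first exact: LatZ.
by rewrite -scalerBr; have := inPZ hc e; rewrite add0r.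
Qed.

Lemma Approx0 k : Approx k 0.
Proof. exact/Approx_Lat/Lat0. Qed.

Lemma Approx_sum k (I : Type) (s : seq I) (P : pred I) (f : I -> E) :
  (forall i, P i -> Approx k (f i)) -> Approx k (\sum_(i <- s | P i) f i).
Proof.
by move=> h; apply: (big_ind (Approx k)) => //; [apply: Approx0| apply: ApproxD].
Qed.

Lemma Approx_all k : (k < n)%N -> Approx k (pi ^+ k) ->
  forall x, inO vE x -> Approx k x.
Proof.
move=> kn hk.
have hpi : forall j, Approx k (pi ^+ j).
  elim=> [|j IH].
    case: k kn hk => [|k] kn hk //; apply: Approx_Lat; apply: Lat_pi => //.
    exact: ltnW.
  case: IH => y [e [e1 e2 ->]] hy.
  apply: (@Approx_trans _ _ (pi * Lf e)).
    rewrite /Lf mulr_sumr; apply: Approx_sum => i _.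
    have [ik|ki] := ltnP i k; last by rewrite e2 // scale0r mulr0; apply: Approx0.
    rewrite -scalerAr -exprS; apply: ApproxZ => //.
    have [ik2|] := ltnP i.+1 k.
      by apply: Approx_Lat; apply: Lat_pi => //; apply: ltnW.
    by move=> ki; have -> : i.+1 = k by apply/eqP; rewrite eqn_leq ki ik.
  rewrite exprS -mulrBr; have := inPM HvE (inO_piX 1) hy.
  by rewrite expr1 add0r.
move=> x hx; have [s [hs hxs]] := Hres hx.
apply: Approx_trans hxs; apply: Approx_sum => i _.
by rewrite mulr_algl; apply: ApproxZ => //; apply: hs; apply: mem_nth.
Qed.


Lemma inP_wX k : inP v k%:Z (w ^+ k).
Proof. by right; rewrite dvX // Hw mulr1. Qed.

Lemma vwinv : v w^-1 = -1.
Proof. by rewrite dvV // Hw. Qed.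

Lemma Lf0 : Lf (fun _ => 0) = 0.
Proof. by rewrite /Lf big1 // => i _; rewrite scale0r. Qed.

Lemma Compl k : (forall x, inO vE x -> Approx k x) ->
  forall x, inO vE x ->
  exists e : 'I_n -> F, (forall i : 'I_n, (k <= i)%N -> e i = 0) /\ x = Lf e.
Proof.
move=> hA x hx.
have G : forall z : E, exists e : 'I_n -> F, inO vE z ->
   [/\ forall i, inO v (e i), forall i : 'I_n, (k <= i)%N -> e i = 0
     & inP vE 1 (z - Lf e)].
  move=> z; case: (classic (inO vE z)) => hz; last by exists (fun _ => 0).
  by have [y [e [e1 e2 ->]] hy] := hA z hz; exists e.
pose g z := proj1_sig (constructive_indefinite_description _ (G z)).
have gP z : inO vE z -> [/\ forall i, inO v (g z i),
    forall i : 'I_n, (k <= i)%N -> g z i = 0 & inP vE 1 (z - Lf (g z))].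
  exact: (proj2_sig (constructive_indefinite_description _ (G z))).
pose xs := fix f (N : nat) : E :=
  if N is N'.+1 then w^-1 *: (f N' - Lf (g (f N'))) else x.
have xsO : forall N, inO vE (xs N).
  elim=> [|N IH] //=; have [_ _ h] := gP _ IH.
  have := inPZ (_ : inP v (-1) w^-1) h; rewrite addNr; apply.
  by right; rewrite vwinv.
pose C N i := \sum_(j < N) w ^+ j * g (xs j) i.
have xsE : forall N, x = Lf (C N) + w ^+ N *: xs N.
  elim=> [|N IH].
    rewrite expr0 scale1r /C -[X in X = _]add0r; congr (_ + _).
    by rewrite /Lf big1 // => i _; rewrite big_ord0 scale0r.
  have hC : Lf (C N.+1) = Lf (C N) + w ^+ N *: Lf (g (xs N)).
    rewrite /C /Lf scaler_sumr -big_split /=; apply: eq_bigr => i _.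
    by rewrite big_ord_recr /= scalerDl scalerA.
  rewrite {1}IH /= scalerA exprSr -mulrA mulfV // mulr1.
  by rewrite scalerBr hC addrACA subrr addr0.
have Cc : forall N d i, inP v N%:Z (C (N + d)%N i - C N i).
  move=> N; elim=> [|d IH] i; first by rewrite addn0 subrr; left.
  rewrite addnS /C big_ord_recr /= -/(C _ i) addrAC; apply: (inPD Hv) => //.
  have [g1 _ _] := gP _ (xsO (N + d)%N).
  have := inPM Hv (inP_wX (N + d)) (g1 i); rewrite addr0 => hh.
  apply: (@inPW _ _ N%:Z (N + d)%N%:Z) => //; lia.
have Lim : forall i, exists l, forall N : int, exists M,
    forall j, (M <= j)%N -> inP v N (C j i - l).
  move=> i; apply: Hcomp => N; exists `|N|%N => a b ha hb.
  have e1 := Cc `|N|%N (a - `|N|)%N i; rewrite subnKC in e1 => //.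
  have e2 := Cc `|N|%N (b - `|N|)%N i; rewrite subnKC in e2 => //.
  have -> : C a i - C b i = (C a i - C `|N|%N i) - (C b i - C `|N|%N i).
    by rewrite opprB addrA subrK.
  apply: (inPW _ (inPB Hv e1 e2)).
  by rewrite abszE; exact: ler_norm.
pose lim i := proj1_sig (constructive_indefinite_description _ (Lim i)).
have limP i : forall N : int, exists M,
    forall j, (M <= j)%N -> inP v N (C j i - lim i).
  exact: (proj2_sig (constructive_indefinite_description _ (Lim i))).
pose l (i : 'I_n) := if (k <= i)%N then 0 else lim i.
exists l; split; first by move=> i hi; rewrite /l hi.
apply/eqP; rewrite -subr_eq0; apply/eqP.
set D := x - Lf l.
have [//|D0] := eqVneq D 0.
pose N := (`|vE D|.+1)%N.
have HM : forall i, exists M, forall j, (M <= j)%N -> inP v N%:Z (C j i - l i).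
  move=> i; rewrite /l; case: ifP => ki; last exact: limP.
  exists 0%N => j _; rewrite subr0 /C big1; first by left.
  move=> j' _; have [_ g2 _] := gP _ (xsO j'); by rewrite g2 // mulr0.
pose Mf i := proj1_sig (constructive_indefinite_description _ (HM i)).
have MfP i : forall j, (Mf i <= j)%N -> inP v N%:Z (C j i - l i).
  exact: (proj2_sig (constructive_indefinite_description _ (HM i))).
pose N2 := maxn N (\max_i Mf i).
have hD : inP vE N%:Z D.
  have -> : D = Lf (fun i => C N2 i - l i) + w ^+ N2 *: xs N2.
    rewrite /D {1}(xsE N2) addrAC; congr (_ + _); rewrite /Lf -sumrB.
    by apply: eq_bigr => i _; rewrite scalerBl.
  apply: (inPD HvE).
    apply: (inP_sum HvE) => i _; rewrite -[N%:Z]addr0; apply: inPZ.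
      apply: MfP; apply: leq_trans (leq_maxr _ _).
      exact: (leq_bigmax_cond (F := Mf) i).
    exact: inO_piX.
  rewrite -[N%:Z]addr0; apply: inPZ; last exact: xsO.
  apply: (inPW _ (inP_wX N2)); by rewrite lez_nat leq_maxl.
have := inP_val hD D0; rewrite /N; lia.
Qed.


Lemma cd_inj x y : (forall j, cd j x = cd j y) -> x = y.
Proof.
by move=> h; rewrite (cd_expand x) (cd_expand y); apply: eq_bigr => i _; rewrite h.
Qed.

Lemma S_lemma (d : 'I_n -> F) : (forall i, inO v (d i)) ->
  inP vE 1 (Lf d) -> forall i, inP v 1 (d i).
Proof.
move=> dO hT i; apply/inPb_P; apply/negPn/negP => hi.
have [k0 Pk0 k0max] := @arg_maxnP _ i
   (fun j => ~~ ((d j == 0) || (1 <= v (d j)))) (fun j : 'I_n => (j : nat)) hi.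
set a := d k0.
have a0 : a != 0 by move: Pk0; rewrite negb_or => /andP[].
have va : v a = 0.
  move: Pk0 (dO k0); rewrite negb_or -/a => /andP[_ h1] [/eqP|h2].
    by rewrite (negPf a0).
  by move: h1 h2; rewrite -ltNge; lia.
have vai : v a^-1 = 0 by rewrite dvV // va.
have aiO : inO v a^-1 by right; rewrite vai.
have dj_a : forall j, inO v (d j * a^-1) by move=> j; apply: inOM.
pose e (j : 'I_n) := if (j < k0)%N then - (d j * a^-1) else 0.
pose r (j : 'I_n) := if (k0 < j)%N then d j * a^-1 else 0.
have hk : Approx k0 (pi ^+ k0).
  apply: (@Approx_trans _ _ (Lf e)).
    apply: Approx_Lat; exists e; split => //.
    - move=> j; rewrite /e; case: ifP => _; last by left.
      exact: (inPN Hv (dj_a j)).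
    - by move=> j hj; rewrite /e ltnNge hj.
  have -> : pi ^+ k0 - Lf e = a^-1 *: Lf d - Lf r.
    apply: cd_inj => j; rewrite !linearB /= !linearZ /= !cd_sum cd_pi.
    rewrite /e /r; case: (ltngtP j k0) => hj.
    - by rewrite -val_eqE /= gtn_eqF // mulrC subr0 sub0r opprK.
    - by rewrite -val_eqE /= ltn_eqF // sub0r mulrC subrr oppr0.
    - have ekj : k0 = j by apply: val_inj.
      by rewrite -ekj eqxx !subr0; exact: esym (mulVf a0).
  apply: (inPB HvE).
    by have := inPZ aiO hT; rewrite add0r.
  apply: (inP_sum HvE) => j _; rewrite -[1]addr0; apply: inPZ; last exact: inO_piX.
  rewrite /r; case: ifP => hj; last by left.
  have : ~~ ~~ ((d j == 0) || (1 <= v (d j))).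
    by apply/negP => h; have := k0max j h; rewrite /= leqNgt hj.
  rewrite negbK => /inPb_P hdj.
  by have := inPM Hv hdj aiO; rewrite addr0.
have [l [l0 hl]] := Compl (Approx_all (ltn_ord k0) hk) (inO_piX k0).
have := congr1 (coord X k0) hl; rewrite cd_pi cd_sum eqxx l0 //.
by move/eqP; rewrite oner_eq0.
Qed.

Lemma IB_hard (t : int) x : inP vE t x -> forall i, inP v t (cd i x).
Proof.
move=> hx.
have [->|x0] := eqVneq x 0; first by move=> i; rewrite linear0; left.
have : ~ (forall i, cd i x = 0).
  move=> h; move/eqP: x0; apply; rewrite (cd_expand x) big1 // => i _.
  by rewrite h scale0r.
move/not_all_ex_not => [i0 /eqP ci0].
have [i1 Pi1 i1min] := @arg_minP _ _ _ i0 (fun i => cd i x != 0)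
   (fun i => v (cd i x)) ci0.
have [tmu|mut] := leP t (v (cd i1 x)).
  move=> i; have [->|c0] := eqVneq (cd i x) 0; first by left.
  by right; apply: le_trans tmu (i1min i c0).
exfalso.
set a := cd i1 x in Pi1 mut i1min.
pose d (j : 'I_n) := a^-1 * cd j x.
have hd : forall j, cd j (a^-1 *: x) = d j by move=> j; rewrite linearZ.
have dO : forall j, inO v (d j).
  move=> j; rewrite /d; have [->|c0] := eqVneq (cd j x) 0; first by rewrite mulr0; left.
  right; rewrite dvM ?invr_neq0 // dvV //.
  have := i1min j c0; rewrite /=; lia.
have hy : inP vE 1 (Lf d).
  have -> : Lf d = a^-1 *: x.
    by rewrite (cd_expand (a^-1 *: x)); apply: eq_bigr => j _; rewrite hd.
  have hai : inP v (- v a) a^-1 by right; rewrite dvV.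
  apply: (inPW _ (inPZ hai hx)); move: mut; lia.
have := S_lemma dO hy i1; rewrite /d /a mulVf //.
exact: not_inP_1.
Qed.


Lemma lst_lt : (n.-1 < n)%N.
Proof. by rewrite ltn_predL; apply: ltnW. Qed.
Definition lst : 'I_n := Ordinal lst_lt.
Lemma zero_lt : (0 < n)%N.
Proof. exact: ltnW. Qed.
Definition i00 : 'I_n := Ordinal zero_lt.

Lemma U_lemma z : z != 0 -> vE z = 0 ->
  exists j : 'I_n, ~ inP v 1 (cd lst (z * pi ^+ j)).
Proof.
move=> z0 vz.
case: (classic (exists j : 'I_n, ~ inP v 1 (cd lst (z * pi ^+ j)))) => // hno.
exfalso.
have h : forall j : 'I_n, inP v 1 (cd lst (z * pi ^+ j)).
  by move=> j; apply: NNPP => hj; apply: hno; exists j.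
pose y := z^-1 * pi ^+ n.-1.
have yO : inO vE y.
  right; rewrite dvM ?invr_neq0 ?expf_neq0 ?pi_neq0 // dvV // vpiX vz; lia.
have eO := IB_hard yO.
have : pi ^+ n.-1 = \sum_j cd j y *: (z * pi ^+ j).
  rewrite -[LHS](mulVKf z0) -/y {1}(cd_expand y) mulr_sumr.
  by apply: eq_bigr => j _; rewrite scalerAr.
move/(congr1 (coord X lst)).
have -> : cd lst (pi ^+ n.-1) = 1 by rewrite (cd_pi lst lst) eqxx.
rewrite linear_sum /= => h1.
have : inP v 1 (\sum_j cd j y * cd lst (z * pi ^+ j)).
  apply: (inP_sum Hv) => j _; have := inPM Hv (eO j) (h j); rewrite add0r.
  by [].
have -> : \sum_j cd j y * cd lst (z * pi ^+ j) = 1.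
  by rewrite h1; apply: eq_bigr => j _; rewrite linearZ.
exact: not_inP_1.
Qed.

Lemma exists_val (t : int) : exists s : F, s != 0 /\ v s = t.
Proof.
case: t => k.
  by exists (w ^+ k); rewrite expf_neq0 // dvX // Hw mulr1.
exists (w ^+ k.+1)^-1; rewrite invr_neq0 ?expf_neq0 // dvV ?expf_neq0 //.
by rewrite dvX // Hw mulr1 NegzE.
Qed.

Lemma L_lemma (r : int) z :
  (forall j : 'I_n, inP v r (cd lst (z * pi ^+ j))) -> inP vE r z.
Proof.
move=> h; have [->|z0] := eqVneq z 0; first by left.
have [s [s0 vs]] := exists_val (- vE z).
have z00 : s *: z != 0 by rewrite scaler_eq0 negb_or s0.
have vz0 : vE (s *: z) = 0.
  by rewrite -mulr_algl dvM ?alg_neq0 // HvEc // vs addNr.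
have [j hj] := U_lemma z00 vz0.
move: hj; rewrite -scalerAl linearZ /=.
have [c0|c0] := eqVneq (cd lst (z * pi ^+ j)) 0.
  by rewrite c0 mulr0 => hh; exfalso; apply: hh; left.
move=> hh; right.
have hr := inP_val (h j) c0.
have : ~ (1 <= v (s * cd lst (z * pi ^+ j))) by move=> hh2; apply: hh; right.
rewrite dvM // vs; lia.
Qed.


Local Notation M := (Emat n m w beta).

Lemma Mij x i j : M x i j = cd i (x * pi ^+ j).
Proof. by rewrite mxE tnthX. Qed.

Lemma M1 : M 1 = 1%:M.
Proof. by apply/matrixP => i j; rewrite Mij mul1r cd_pi !mxE eq_sym. Qed.

Lemma MB x y : M (x - y) = M x - M y.
Proof. by apply/matrixP => i j; rewrite !mxE mulrBl linearB. Qed.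

Lemma MZ c x : M (c *: x) = c *: M x.
Proof. by apply/matrixP => i j; rewrite !mxE -scalerAl linearZ. Qed.

Definition MP (r : int) (A : 'M[F]_n) := forall i j, inP v r (A i j).

Lemma MP_mul r s A B : MP r A -> MP s B -> MP (r + s) (A *m B).
Proof.
by move=> hA hB i j; rewrite mxE; apply: (inP_sum Hv) => k _; apply: inPM.
Qed.

Lemma MP_add r A B : MP r A -> MP r B -> MP r (A + B).
Proof. by move=> hA hB i j; rewrite mxE; apply: inPD. Qed.

Lemma MP_sub r A B : MP r A -> MP r B -> MP r (A - B).
Proof. by move=> hA hB i j; rewrite !mxE; apply: inPB. Qed.

Lemma MP_1 : MP 0 1%:M.
Proof. by move=> i j; rewrite mxE; case: eqP => _; [exact: (inO1 Hv)|left]. Qed.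

Lemma MP_W r s A : r <= s -> MP s A -> MP r A.
Proof. by move=> rs h i j; apply: inPW (h i j). Qed.

Lemma MP0_of r u : 0 <= r -> MP r (u - 1%:M) -> MP 0 u.
Proof.
move=> r0 h; have -> : u = (u - 1%:M) + 1%:M by rewrite subrK.
by apply: MP_add; [apply: MP_W h|apply: MP_1].
Qed.

Lemma Ur_mul (r : int) a b : MP r (a - 1%:M) -> MP r (b - 1%:M) -> MP 0 a ->
  MP r (a *m b - 1%:M).
Proof.
move=> ha hb a0.
have -> : a *m b - 1%:M = a *m (b - 1%:M) + (a - 1%:M).
  by rewrite mulmxBr mulmx1 addrA subrK.
by apply: MP_add => //; have := MP_mul a0 hb; rewrite add0r.
Qed.

Lemma M_int (t : int) x : inP vE t x -> MP t (M x).
Proof.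
move=> hx i j; rewrite Mij; apply: IB_hard.
by have := inPM HvE hx (inO_piX j); rewrite addr0.
Qed.

Lemma M_one (r : int) x : inP vE r (x - 1) -> MP r (M x - 1%:M).
Proof. by move=> h; rewrite -M1 -MB; apply: M_int. Qed.

Lemma inO_of_one (r : int) x : 0 <= r -> inP vE r (x - 1) -> inO vE x.
Proof.
move=> r0 h; have -> : x = (x - 1) + 1 by rewrite subrK.
by apply: (inPD HvE); [apply: inPW h|apply: (inO1 HvE)].
Qed.

Lemma Core (r : int) x u : inO vE x -> MP r (u - 1%:M) ->
  (forall j, inP v r ((M x *m u - 1%:M) lst j)) -> inP vE r (x - 1).
Proof.
move=> hx hu hl; apply: L_lemma => j.
have -> : cd lst ((x - 1) * pi ^+ j) = (M x - 1%:M) lst j by rewrite -M1 -MB Mij.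
have -> : M x - 1%:M = (M x *m u - 1%:M) - M x *m (u - 1%:M).
  by rewrite mulmxBr mulmx1 opprB [RHS]addrC [RHS]addrA subrK.
set A := M x *m u - 1%:M; set B := M x *m (u - 1%:M).
have -> : (A - B) lst j = A lst j - B lst j by rewrite !mxE.
apply: (inPB Hv); first exact: hl.
by have := MP_mul (M_int hx) hu lst j; rewrite add0r.
Qed.

Lemma Sigma_diag (w' : F) :
  Sigma n w' m = diag_mx (\row_(i < n) w' ^+ ((m + 1) * (n.-1 - i))) :> 'M[F]_n.
Proof.
apply/matrixP => i j; rewrite !mxE; case: (eqVneq i j) => [->|h].
  by rewrite ?eqxx ?mulr1n.
by rewrite ?(negPf h) ?mulr0n.
Qed.

Lemma Kp_lr g : Kprime v w m g ->
  forall j, inP v (m + 1)%N ((g - 1%:M) lst j).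
Proof.
case=> k [[Kk [Klr Kd]] ->] j.
set S := Sigma n w m.
have Su : S \in unitmx.
  rewrite unitmxE /S Sigma_diag det_diag unitfE; apply/prodf_neq0 => i _.
  by rewrite mxE expf_neq0.
have hgS : (S *m k *m invmx S) *m S = S *m k by rewrite mulmxKV.
set G := S *m k *m invmx S in hgS *.
have e1 : G lst j * w ^+ ((m + 1) * (n.-1 - j)) = k lst j.
  have := congr1 (fun A : 'M[F]_n => A lst j) hgS; rewrite /S Sigma_diag mul_mx_diag.
  by rewrite mul_diag_mx !mxE subnn muln0 expr0 mul1r.
have -> : (G - 1%:M) lst j = G lst j - (1%:M : 'M[F]_n) lst j by rewrite !mxE.
rewrite [X in _ - X]mxE; case: (eqVneq lst j) => [ej|hj].
  rewrite -ej ?eqxx ?mulr1n; rewrite -ej subnn muln0 expr0 mulr1 in e1.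
  rewrite e1; apply: inPW (Kd lst erefl); rewrite lez_nat leq_pmull //; exact: zero_lt.
have jlt : (j < n.-1)%N.
  move: hj; rewrite -val_eqE /= eq_sym => hj.
  have jle : (j <= n.-1)%N by rewrite -ltnS (prednK zero_lt).
  by move: jle; rewrite leq_eqVlt (negPf hj).
have -> : (false%:R : F) = 0 by []. rewrite subr0.
have [->|G0] := eqVneq (G lst j) 0; first by left.
right; have hk := Klr lst j erefl jlt.
have k0 : k lst j != 0 by rewrite -e1 mulf_neq0 // expf_neq0.
have := inP_val hk k0; rewrite -e1 dvM // ?expf_neq0 // dvX // Hw mulr1.
have np := prednK zero_lt; move: jlt np; lia.
Qed.


Lemma half_facts : (m./2 + 1 <= m + 1)%N /\ (1 <= (m.+1)./2)%N /\ (1 <= m./2 + 1)%N.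
Proof. exact: half_facts_gen Hm. Qed.

Lemma UnE (a h : 'M[F]_n) j : Un a -> (a *m h) lst j = h lst j.
Proof.
move=> Ua; rewrite mxE (bigD1 lst) //= (Ua lst lst).1 mul1r big1 ?addr0 // => k hk.
rewrite (Ua lst k).2 ?mul0r //.
have jle : (k <= n.-1)%N by rewrite -ltnS (prednK zero_lt).
move: hk jle; rewrite -val_eqE /= leq_eqVlt => /negPf ->.
by [].
Qed.

Lemma Un_col (a : 'M[F]_n) i : Un a -> (a - 1%:M) i i00 = 0.
Proof.
move=> Ua; rewrite !mxE; case: (eqVneq i i00) => [->|h].
  by rewrite (Ua i00 i00).1 subrr.
rewrite (Ua i i00).2; last by rewrite lt0n; move: h; rewrite -val_eqE.
by rewrite ?(negPf h) subrr.
Qed.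

Lemma Ur_MP (r : nat) (u : 'M[F]_n) : Ur v r u -> MP r%:Z (u - 1%:M).
Proof. by []. Qed.

Lemma part1 (g : 'M[F]_n) :
  (H1 v vE m w beta g /\ Kprime v w m g) <-> (Ur v (m./2 + 1) g /\ Kprime v w m g).
Proof.
have [hr _] := half_facts.
split.
  move=> [[e [u [[x [hx ->]] [hu ->]]]] hK]; split => //.
  have xO : inO vE x by apply: inO_of_one hx.
  have hx2 : inP vE (m./2 + 1)%N (x - 1).
    apply: Core xO (Ur_MP hu) _ => j.
    by apply: inPW (Kp_lr hK j); rewrite lez_nat.
  exact: Ur_mul (M_one hx2) (Ur_MP hu) (M_int xO).
move=> [hU hK]; split => //; exists (M 1), g; split.
  by exists 1; split; [rewrite subrr; left|].
by split => //; rewrite M1 mul1mx.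
Qed.

Lemma part2 (g : 'M[F]_n) :
  ((exists a h, (Un a /\ J1 v vE m w beta a) /\ H1 v vE m w beta h /\ g = a *m h)
        /\ Kprime v w m g) <->
     ((exists a u, (Un a /\ Ur v (m.+1)./2 a) /\ Ur v (m./2 + 1) u /\ g = a *m u)
        /\ Kprime v w m g).
Proof.
have [hr [ht _]] := half_facts.
split.
  move=> [[a [h [[Ua [e1 [u1 [[x1 [hx1 He1]] [hu1 Ha]]]]] [[e2 [u2 [[x2 [hx2 He2]] [hu2 Hh]]]] Hg]]]] hK].
  split => //; exists a, h; split; [split => //|split => //].
    have x1O : inO vE x1 by apply: inO_of_one hx1.
    have hxt : inP vE (m.+1)./2 (x1 - 1).
      apply: IB_easy => i.
      have -> : cd i (x1 - 1) = (M x1 - 1%:M) i i00.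
        by rewrite -M1 -MB Mij expr0 mulr1.
      have -> : M x1 - 1%:M = (a - 1%:M) - M x1 *m (u1 - 1%:M).
        by rewrite Ha He1 mulmxBr mulmx1 opprB [RHS]addrC [RHS]addrA subrK.
      set A := a - 1%:M; set B := M x1 *m (u1 - 1%:M).
      have -> : (A - B) i i00 = A i i00 - B i i00 by rewrite !mxE.
      rewrite /A Un_col // sub0r; apply: (inPN Hv).
      by have := MP_mul (M_int x1O) (Ur_MP hu1) i i00; rewrite add0r.
    rewrite Ha He1; exact: Ur_mul (M_one hxt) (Ur_MP hu1) (M_int x1O).
  have x2O : inO vE x2 by apply: inO_of_one hx2.
  have hx2' : inP vE (m./2 + 1)%N (x2 - 1).
    apply: Core x2O (Ur_MP hu2) _ => j.
    rewrite -He2 -Hh.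
    have -> : (h - 1%:M) lst j = (g - 1%:M) lst j.
      by rewrite !mxE Hg UnE.
    by apply: inPW (Kp_lr hK j); rewrite lez_nat.
  rewrite Hh He2; exact: Ur_mul (M_one hx2') (Ur_MP hu2) (M_int x2O).
move=> [[a [u [[Ua Ua'] [Uu ->]]]] hK]; split => //; exists a, u.
split; [split => //|split => //].
  exists (M 1), a; split; first by exists 1; split; [rewrite subrr; left|].
  by split => //; rewrite M1 mul1mx.
exists (M 1), u; split; first by exists 1; split; [rewrite subrr; left|].
by split => //; rewrite M1 mul1mx.
Qed.


Lemma part3 (g : 'M[F]_n) :
  (Jbold v m w beta g /\ Kprime v w m g) <-> (J1 v vE m w beta g /\ Kprime v w m g).
Proof.
have [hr [ht _]] := half_facts.
split; last first.
  move=> [[e [u [[x [hx ->]] [hu ->]]]] hK]; split => //; exists (M x), u.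
  split => //; exists x; split => //.
  apply/eqP => x0; move: hx; rewrite x0 sub0r; exact: (not_inP_N1 HvE).
move=> [[e [u [[x [x0 ->]] [hu ->]]]] hK]; split => //.
exists (M x), u; split => //; exists x; split => //.
have hu1 : MP 1 (u - 1%:M) by apply: MP_W (Ur_MP hu); rewrite lez_nat.
have uO : MP 0 u by apply: MP0_of hu1.
have hlr := Kp_lr hK.
pose gg := M x *m u.
have gint : forall j, inO v (gg lst j).
  move=> j; have -> : gg lst j = (gg - 1%:M) lst j + (1%:M : 'M[F]_n) lst j.
    by rewrite !mxE subrK.
  apply: (inPD Hv); first by apply: inPW (hlr j); rewrite lez_nat.
  by apply: MP_1.
have gll : ~ inP v 1 (gg lst lst).
  move=> h; have hl1 : inP v 1 ((gg - 1%:M) lst lst).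
    by apply: inPW (hlr lst); rewrite lez_nat addn1.
  have := inPB Hv h hl1.
  have -> : gg lst lst - (gg - 1%:M) lst lst = 1 by rewrite !mxE eqxx mulr1n opprB addrC subrK.
  exact: (not_inP_1 Hv ltr01).
have [s [s0 vs]] := exists_val (- vE x).
have z00 : s *: x != 0 by rewrite scaler_eq0 negb_or s0.
have vz0 : vE (s *: x) = 0.
  by rewrite -mulr_algl dvM ?alg_neq0 // HvEc // vs addNr.
have [j hj] := U_lemma z00 vz0.
have g0E : forall j', (M (s *: x) *m u) lst j' = s * gg lst j'.
  by move=> j'; rewrite MZ -scalemxAl mxE.
have hA : ~ inP v 1 (s * gg lst j).
  rewrite -g0E => h; apply: hj; rewrite -Mij.
  have eM : M (s *: x) = M (s *: x) *m u - M (s *: x) *m (u - 1%:M).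
    by rewrite mulmxBr mulmx1 opprB [RHS]addrC subrK.
  rewrite {1}eM; set A := M (s *: x) *m u; set B := M (s *: x) *m (u - 1%:M).
  have -> : (A - B) lst j = A lst j - B lst j by rewrite !mxE.
  apply: (inPB Hv h); have := MP_mul (M_int (_ : inO vE (s *: x))) hu1 lst j.
  by rewrite add0r; apply; right; rewrite vz0.
have hB : inO v (s * gg lst lst).
  rewrite -g0E; have := MP_mul (M_int (_ : inO vE (s *: x))) uO lst lst.
  by rewrite add0r; apply; right; rewrite vz0.
have gll0 : gg lst lst != 0 by apply/eqP => e0; apply: gll; rewrite e0; left.
have vgll : v (gg lst lst) = 0.
  have h0 := inP_val (gint lst) gll0.
  have h1 : ~ (1 <= v (gg lst lst)) by move=> hh; apply: gll; right.
  lia.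
have vs0 : v s = 0.
  have [vs1|vs1] := leP 1 (v s).
    exfalso; apply: hA; have := inPM Hv (_ : inP v 1 s) (gint j).
    by rewrite addr0; apply; right.
  have [vs2|vs2] := leP 0 (v s); first by lia.
  exfalso; have := inP_val hB (mulf_neq0 s0 gll0); rewrite dvM // vgll; lia.
have xO : inO vE x by right; move: vs; rewrite vs0; lia.
apply: Core xO hu1 _ => j'.
by apply: inPW (hlr j'); rewrite lez_nat addn1.
Qed.


Lemma Kp0 (hw : w = 0) (g : 'M[F]_n) : Kprime v w m g ->
  (forall i, g i i00 = 0) /\ g lst lst != 0.
Proof.
case=> k [[Kk [Klr Kd]] ->].
set S := Sigma n w m.
have SE : S = diag_mx (\row_(i < n) w ^+ ((m + 1) * (n.-1 - i))) by rewrite /S Sigma_diag.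
have np := prednK zero_lt.
have d0 : w ^+ ((m + 1) * (n.-1 - i00)) = 0.
  rewrite hw expr0n /=; case: eqP => // h; exfalso.
  move/eqP: h; rewrite subn0 muln_eq0 addn1 /= => /eqP h0.
  by move: Hn; rewrite -np h0.
have dl : w ^+ ((m + 1) * (n.-1 - lst)) = 1 by rewrite subnn muln0 expr0.
have Snu : S \notin unitmx.
  by rewrite unitmxE SE det_diag unitfE negbK (bigD1 i00) //= mxE d0 mul0r.
have -> : invmx S = S by rewrite /invmx (negPf Snu).
have gE : forall i j, (S *m k *m S) i j =
    w ^+ ((m + 1) * (n.-1 - i)) * k i j * w ^+ ((m + 1) * (n.-1 - j)).
  by move=> i j; rewrite SE mul_mx_diag mxE mul_diag_mx !mxE.
split; first by move=> i; rewrite gE d0 mulr0.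
rewrite gE dl mul1r mulr1.
apply/eqP => k0; have := Kd lst erefl; rewrite k0 sub0r.
apply: (not_inP_N1 Hv); rewrite ltz_nat muln_gt0 addn1 andbT; exact: zero_lt.
Qed.

Lemma M_w0 (hw : w = 0) x i (j : 'I_n) : j != i00 -> M x i j = 0.
Proof.
move=> hj; rewrite Mij.
have pi0 : pi = 0 by rewrite /pi hw expr0n (gtn_eqF Hm) scale0r mul0r.
rewrite pi0 expr0n.
have -> : (j == 0%N :> nat) = false by move: hj; rewrite -val_eqE /= => /negPf.
by rewrite mulr0 linear0.
Qed.

Lemma w0_contra (hw : w = 0) x (u h : 'M[F]_n) : MP 1 (u - 1%:M) -> h = M x *m u ->
  h lst i00 = 0 -> h lst lst != 0 -> False.
Proof.
move=> hu hE h0 hl.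
have hrow : forall j, h lst j = M x lst i00 * u i00 j.
  move=> j; rewrite hE mxE (bigD1 i00) //= big1 ?addr0 // => k hk.
  by rewrite M_w0 // mul0r.
have u0 : u i00 i00 != 0.
  apply/eqP => e; have := hu i00 i00; rewrite !mxE eqxx mulr1n e sub0r.
  exact: (not_inP_N1 Hv ltr01).
move: h0; rewrite hrow => /eqP; rewrite mulf_eq0 (negPf u0) orbF => /eqP hM.
by move: hl; rewrite hrow hM mul0r eqxx.
Qed.

Lemma Un_unit (a : 'M[F]_n) : Un a -> a \in unitmx.
Proof.
move=> Ua; rewrite unitmxE -det_tr det_trig.
  by rewrite big1 ?unitr1 // => i _; rewrite mxE (Ua i i).1.
by apply/is_trig_mxP => i j ij; rewrite mxE (Ua j i).2.
Qed.

Lemma w0_case (hw : w = 0) :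
  (forall g : 'M[F]_n,
     (H1 v vE m w beta g /\ Kprime v w m g) <-> (Ur v (m./2 + 1) g /\ Kprime v w m g)) /\
  (forall g : 'M[F]_n,
     ((exists a h, (Un a /\ J1 v vE m w beta a) /\ H1 v vE m w beta h /\ g = a *m h)
        /\ Kprime v w m g) <->
     ((exists a u, (Un a /\ Ur v (m.+1)./2 a) /\ Ur v (m./2 + 1) u /\ g = a *m u)
        /\ Kprime v w m g)) /\
  (forall g : 'M[F]_n,
     (Jbold v m w beta g /\ Kprime v w m g) <-> (J1 v vE m w beta g /\ Kprime v w m g)).
Proof.
have [hr [ht hr1]] := half_facts.
have W1 : forall r (u : 'M[F]_n), (1 <= r)%N -> Ur v r u -> MP 1 (u - 1%:M).
  by move=> r u r1 hu; apply: MP_W (Ur_MP hu); rewrite lez_nat.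
split; [|split] => g; split => -[hL hK]; exfalso; have [c0 ll] := Kp0 hw hK.
- case: hL => e [u [[x [_ Ee]] [hu Eg]]].
  by apply: (w0_contra hw (W1 _ _ hr1 hu) (_ : g = M x *m u) (c0 lst) ll); rewrite Eg Ee.
- have := hL i00 i00; rewrite !mxE c0 eqxx mulr1n sub0r.
  by apply: (not_inP_N1 Hv); rewrite ltz_nat.
- case: hL => a [h [[Ua _] [[e [u [[x [_ Ee]] [hu Eh]]]] Eg]]].
  apply: (w0_contra hw (W1 _ _ hr1 hu) (_ : h = M x *m u)).
  + by rewrite Eh Ee.
  + by rewrite -(UnE h i00 Ua) -Eg c0.
  + by rewrite -(UnE h lst Ua) -Eg.
- case: hL => a [u [[Ua _] [hu Eg]]].
  have uE : u = invmx a *m g by rewrite Eg mulKmx // Un_unit.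
  have u0 : u i00 i00 = 0.
    by rewrite uE mxE big1 // => k _; rewrite c0 mulr0.
  have := hu i00 i00; rewrite !mxE u0 eqxx mulr1n sub0r.
  by apply: (not_inP_N1 Hv); rewrite ltz_nat.
- case: hL => e [u [[x [_ Ee]] [hu Eg]]].
  by apply: (w0_contra hw (W1 _ _ ht hu) (_ : g = M x *m u) (c0 lst) ll); rewrite Eg Ee.
- case: hL => e [u [[x [_ Ee]] [hu Eg]]].
  by apply: (w0_contra hw (W1 _ _ ht hu) (_ : g = M x *m u) (c0 lst) ll); rewrite Eg Ee.
Qed.

Lemma wne0_case :
  (forall g : 'M[F]_n,
     (H1 v vE m w beta g /\ Kprime v w m g) <-> (Ur v (m./2 + 1) g /\ Kprime v w m g)) /\
  (forall g : 'M[F]_n,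
     ((exists a h, (Un a /\ J1 v vE m w beta a) /\ H1 v vE m w beta h /\ g = a *m h)
        /\ Kprime v w m g) <->
     ((exists a u, (Un a /\ Ur v (m.+1)./2 a) /\ Ur v (m./2 + 1) u /\ g = a *m u)
        /\ Kprime v w m g)) /\
  (forall g : 'M[F]_n,
     (Jbold v m w beta g /\ Kprime v w m g) <-> (J1 v vE m w beta g /\ Kprime v w m g)).
Proof. by split; [exact: part1|split; [exact: part2|exact: part3]]. Qed.

End Main.

Theorem lemma6p5
  (F : fieldType) (v : F -> int) (w : F)
  (E : fieldExtType F) (vE : E -> int) (n m : nat) (beta : E) :
  (* F a non-archimedean local field with uniformizer w *)
  nonarch_local_field v -> v w = 1 ->
  (2 <= n)%N -> (1 <= m)%N ->
  (* E/F of degree n, with valuation vE extending v with ramification index 1: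
     E/F unramified *)
  \dim {: E} = n -> is_dval vE ->
  (forall c : F, c != 0 -> vE c%:A = v c) ->
  (* E = F[beta], nu_E(beta) = -m *)
  (<< 1%VS; beta >>)%VS = fullv ->
  beta != 0 -> vE beta = - (m%:Z) ->
  (* w^m beta + p_E generates k_E over k_F *)
  (forall x : E, inO vE x -> exists s : seq F, (forall c, c \in s -> inO v c) /\
      inP vE 1 (x - \sum_(i < size s) (s`_i)%:A * ((w ^+ m)%:A * beta) ^+ i)) ->
  (* (1) *)
  (forall g : 'M[F]_n,
     (H1 v vE m w beta g /\ Kprime v w m g) <-> (Ur v (m./2 + 1) g /\ Kprime v w m g)) /\
  (* (2) *)
  (forall g : 'M[F]_n,
     ((exists a h, (Un a /\ J1 v vE m w beta a) /\ H1 v vE m w beta h /\ g = a *m h)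
        /\ Kprime v w m g) <->
     ((exists a u, (Un a /\ Ur v (m.+1)./2 a) /\ Ur v (m./2 + 1) u /\ g = a *m u)
        /\ Kprime v w m g)) /\
  (* (3) *)
  (forall g : 'M[F]_n,
     (Jbold v m w beta g /\ Kprime v w m g) <-> (J1 v vE m w beta g /\ Kprime v w m g)).
Proof.
move=> [Hv Hcomp Hfin] Hw Hn Hm HdimE HvE HvEc Hgen Hb0 Hvb Hres.
have [hw|hw0] := eqVneq w 0.
  by apply: w0_case.
by apply: wne0_case.
Qed.
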